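(* Let $M$ and $N$ be positive integers. For an integer $N_{\rm in}$, put $N_{\rm ou}=N-N_{\rm in}$. Call $N_{\rm in}$ feasible if it forms a (genuine) two-level nested array, i.e. $N_{\rm in}\ge 1$ and $N_{\rm ou}\ge 2$ (equivalently $N_{\rm in}\in\{1,2,\dots,N-2\}$), and it satisfies the dimension constraint $$N_{\rm ou}(N_{\rm in}+1)d-d\le (M-1)d,$$ where $d>0$. Define $$N_{\rm in}^l=\left\lfloor \frac{(N-1)-\sqrt{(N+1)^2-4M}}{2}\right\rfloor,\qquad N_{\rm in}^u=\left\lceil \frac{(N-1)+\sqrt{(N+1)^2-4M}}{2}\right\rceil .$$ Then the set $\mathcal S_{\rm NA}$ of feasible $N_{\rm in}$ is: (i) $\mathcal S_{\rm NA}=\{1,2,\dots,N-2\}$ if $\frac{(N+1)^2}{4}\le M$; (ii) $\mathcal S_{\rm NA}=\{1,\dots,N_{\rm in}^l\}\cup\{N_{\rm in}^u,\dots,N-2\}$ if $\frac{(N+1)^2}{4}> M$ and $N_{\rm in}^l\ge 1$.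
   Context: Setting: a uniform linear array of $M$ antenna pixels with adjacent spacing $d$ (physical dimension $(M-1)d$), from which $N$ pixels are activated to form a two-level nested array: an inner compact array of $N_{\rm in}$ pixels with spacing $d$, followed by an outer uniform array of $N_{\rm ou}=N-N_{\rm in}$ pixels with spacing $(N_{\rm in}+1)d$, the last inner pixel and first outer pixel being separated by $d$. Its physical dimension is $N_{\rm ou}(N_{\rm in}+1)d-d$, which must not exceed that of the original array. The cases $N_{\rm in}=0$ or $N_{\rm ou}\in\{0,1\}$ are excluded since the array then reduces to a compact array. *)

(* Defs.v *)
From Stdlib Require Import Reals ZArith.
Open Scope R_scope.

(* floor and ceiling on R.  Int_part r = up r - 1 is the floor of r. *)
Definition Zfloor (x : R) : Z := Int_part x.
Definition Zceil (x : R) : Z := (- Int_part (- x))%Z.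

Definition feasible (M N : nat) (d : R) (Nin : Z) : Prop :=
  let Nou := (Z.of_nat N - Nin)%Z in
  (1 <= Nin)%Z /\ (2 <= Nou)%Z /\
  IZR Nou * (IZR Nin + 1) * d - d <= (INR M - 1) * d.

Definition Nin_l (M N : nat) : Z :=
  Zfloor (((INR N - 1) - sqrt ((INR N + 1) ^ 2 - 4 * INR M)) / 2).
Definition Nin_u (M N : nat) : Z :=
  Zceil (((INR N - 1) + sqrt ((INR N + 1) ^ 2 - 4 * INR M)) / 2).

(* Main.v *)
Require Import Defs.
From Stdlib Require Import Reals ZArith Lra Lia Psatz.
Open Scope R_scope.

Lemma IZR_N (N : nat) : IZR (Z.of_nat N) = INR N.
Proof. rewrite INR_IZR_INZ; reflexivity. Qed.

Lemma Zle_R (a b : Z) : (a <= b)%Z <-> IZR a <= IZR b.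
Proof. split; [apply IZR_le | apply le_IZR]. Qed.

Lemma floor_char (x : Z) (r : R) : (x <= Zfloor r)%Z <-> IZR x <= r.
Proof.
  unfold Zfloor. destruct (base_Int_part r) as [H1 H2]. unfold Int_part in *. split; intro H.
  - pose proof (IZR_le _ _ H). lra.
  - destruct (Z_le_gt_dec x (up r - 1)) as [|Hc]; auto.
    assert (Hc' : (up r - 1 + 1 <= x)%Z) by lia.
    pose proof (IZR_le _ _ Hc') as Hc2. rewrite plus_IZR in Hc2. lra.
Qed.

Lemma ceil_char (x : Z) (r : R) : (Zceil r <= x)%Z <-> r <= IZR x.
Proof.
  unfold Zceil. change (Int_part (- r)) with (Zfloor (- r)). split; intro H.
  - assert (H' : (- x <= Zfloor (- r))%Z) by lia.
    apply (floor_char (-x) (-r)) in H'. rewrite opp_IZR in H'. lra.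
  - assert (H' : IZR (- x) <= - r) by (rewrite opp_IZR; lra).
    apply floor_char in H'. lia.
Qed.

Lemma key (M N : nat) (d : R) (x : Z) : 0 < d ->
  feasible M N d x <-> ((1 <= x)%Z /\ (x <= Z.of_nat N - 2)%Z /\
     IZR x * IZR x - (INR N - 1) * IZR x + INR M - INR N >= 0).
Proof.
  intro Hd. unfold feasible. rewrite minus_IZR, IZR_N.
  split.
  - intros [H1 [H2 H3]]. split; [exact H1|]. split; [lia|].
    assert (H4 : (INR N - IZR x) * (IZR x + 1) - 1 <= INR M - 1).
    { apply (Rmult_le_reg_r d); [exact Hd|]. lra. }
    nra.
  - intros [H1 [H2 H3]]. split; [exact H1|]. split; [lia|].
    assert (H4 : (INR N - IZR x) * (IZR x + 1) - 1 <= INR M - 1) by nra.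
    assert (H5 := Rmult_le_compat_r d _ _ (Rlt_le _ _ Hd) H4). lra.
Qed.

Theorem proposition1 (M N : nat) (d : R) :
  (0 < M)%nat -> (0 < N)%nat -> 0 < d ->
  ((INR N + 1) ^ 2 / 4 <= INR M ->
     forall Nin : Z, feasible M N d Nin <->
       (1 <= Nin /\ Nin <= Z.of_nat N - 2)%Z) /\
  ((INR N + 1) ^ 2 / 4 > INR M -> (1 <= Nin_l M N)%Z ->
     forall Nin : Z, feasible M N d Nin <->
       ((1 <= Nin /\ Nin <= Nin_l M N) \/
        (Nin_u M N <= Nin /\ Nin <= Z.of_nat N - 2))%Z).
Proof.
  intros HM HN Hd. split.
  - intros HD x. rewrite (key M N d x Hd). split; [tauto|].
    intros [H1 H2]. split; [exact H1|]. split; [exact H2|].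
    set (y := IZR x).
    assert (Hsq : 0 <= (2 * y - (INR N - 1)) * (2 * y - (INR N - 1))) by apply Rle_0_sqr.
    simpl in HD. lra.
  - intros HD Hl x. rewrite (key M N d x Hd).
    set (D := (INR N + 1) ^ 2 - 4 * INR M).
    assert (HDp : 0 < D) by (unfold D; lra).
    set (s := sqrt D).
    assert (Hs0 : 0 < s) by (apply sqrt_lt_R0; exact HDp).
    assert (Hss : s * s = D) by (apply sqrt_sqrt; lra).
    set (rm := ((INR N - 1) - s) / 2).
    set (rp := ((INR N - 1) + s) / 2).
    assert (Hl' : 1 <= rm).
    { assert (H := proj1 (floor_char 1 rm) Hl). simpl in H. exact H. }
    assert (HN2 : IZR (Z.of_nat N - 2) = INR N - 2)
      by (rewrite minus_IZR, IZR_N; reflexivity).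
    assert (Hq : forall y, y * y - (INR N - 1) * y + INR M - INR N
                            = (y - rm) * (y - rp)).
    { intro y. unfold rm, rp. unfold D in Hss. nra. }
    rewrite Hq.
    fold (Nin_l M N). fold (Nin_u M N).
    unfold Nin_l, Nin_u. fold D s. fold rm rp.
    rewrite floor_char, ceil_char.
    set (y := IZR x).
    split.
    + intros [H1 [H2 H3]].
      destruct (Rle_dec y rm) as [Ha|Ha].
      * left. split; [exact H1|exact Ha].
      * destruct (Rle_dec rp y) as [Hb|Hb].
        -- right. split; [exact Hb|exact H2].
        -- exfalso. apply Rnot_le_lt in Ha. apply Rnot_le_lt in Hb.
           assert (0 < (y - rm) * (rp - y)) by (apply Rmult_lt_0_compat; lra). lra.
    + intros [[H1 H2]|[H1 H2]].
      * split; [exact H1|]. split.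
        -- apply Zle_R. rewrite HN2. unfold y in H2. unfold rm in *. lra.
        -- assert (0 <= (rm - y) * (rp - y)) by (apply Rmult_le_pos; unfold rp, rm in *; lra). lra.
      * split.
        -- apply Zle_R. simpl. unfold y in H1. unfold rp in *. unfold rm in Hl'. lra.
        -- split; [exact H2|].
           assert (0 <= (y - rm) * (y - rp)) by (apply Rmult_le_pos; unfold rp, rm in *; lra). lra.
Qed.
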